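(* Let $X$ be a block-independent process and suppose that $Z$ is admissible with respect to $Z^\star$. Then \[ I(X;Z(X))=I(X;Z^\star(X))=\lim_{n\to\infty}\frac{I(X_1^n;Z^\star(X_1^n))}{n}, \] and the limit on the right-hand side exists.
   Context: A process $X=(X_i)_{i\in\mathbb N}$ (with $X_m^n=(X_m,\dots,X_n)$) is block-independent with blocklength $b$ if for every $t\ge1$ and $n=tb$, $\Pr[X_1^n=x_1^n]=\prod_{i=1}^t\Pr[X_1^b=x_{(i-1)b+1}^{ib}]$. A channel $Z$ with finite input alphabet assigns to each finite input string $x$ a random output $Z(x)$ in a discrete set; applying a channel to several inputs means independent applications. $A\to B\to C$ denotes a Markov chain; logs base 2. Information rate $I(X;Z(X))=\liminf_n I(X_1^n;Z(X_1^n))/n$. $Z$ is admissible with respect to $Z^\star$ (same input alphabet) if: (1) there is $c>0$ with $H(Z^\star(X_1^n))\le cn$ for every process $X$ and $n\ge1$; (2) $I(X;Z(X))=I(X;Z^\star(X))$ for every process $X$; (3) for every $X$ and $1\le m\le n$: $X_1^n\to Z^\star(X_1^m),Z^\star(X_{m+1}^n)\to Z^\star(X_1^n)$; (4a) for every integer $\tau\ge1$ there is a non-decreasing $\gamma_m=o(m)$ with $\sum_m\gamma_m/m^2<\infty$ such that for every $X$ and $n\ge\tau$ there are $W_{\mathrm{pre}},W_{\mathrm{suf}}$ with $X_1^n\to Z^\star(X_1^n),W_{\mathrm{pre}}\to Z^\star(X_1^\tau),Z^\star(X_{\tau+1}^n)$, $X_1^n\to Z^\star(X_1^n),W_{\mathrm{suf}}\to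 Z^\star(X_1^{n-\tau}),Z^\star(X_{n-\tau+1}^n)$, $H(W_{\mathrm{pre}}),H(W_{\mathrm{suf}})\le\gamma_n$; (4b) there is $\alpha_m=o(m)$ such that for every $X$, $b$, $t$ there is $W$ with $X_1^{tb}\to Z^\star(X_1^{tb}),W\to Z^\star(X_1^b),\dots,Z^\star(X_{(t-1)b+1}^{tb})$ and $H(W)\le t\alpha_b$; (5) there is $\beta_m=o(m)$ such that for every $X$, $b$, $t$ there are $Y$ with $X_1^{tb}\to Z^\star(X_1^b),\dots,Z^\star(X_{(t-1)b+1}^{tb})\to Y$ and a deterministic $\phi$ with $Z^\star(X_1^{tb})=\phi(Z^\star(X_1^b),\dots,Z^\star(X_{(t-1)b+1}^{tb}),Y)$ and $\max_z\log|\phi^{-1}(z)|\le t\beta_b$. *)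

(* Defs.v *)
From HB Require Import structures.
From mathcomp Require Import all_boot all_order all_algebra.
From mathcomp Require Import all_classical all_reals all_analysis.
Set Implicit Arguments. Unset Strict Implicit. Unset Printing Implicit Defensive.
Import Order.TTheory GRing.Theory Num.Theory numFieldNormedType.Exports.
Local Open Scope classical_set_scope.
Local Open Scope ring_scope.

Section Info.
Variable R : realType.

Definition log2 (x : R) : R := ln x / ln 2.

Definition psum {T : choiceType} (f : T -> R) : R :=
  fine (\esum_(t in [set: T]) (f t)%:E).

Definition is_pmf {T : choiceType} (p : T -> R) : Prop :=
  (forall t, 0 <= p t) /\ (\esum_(t in [set: T]) (p t)%:E = 1%E).

(** Shannon entropy (bits), convention 0 log 0 = 0 *)
Definition ent {T : choiceType} (p : T -> R) : \bar R :=
  \esum_(t in [set: T]) (- (p t * log2 (p t)))%:E.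

Definition cent {T U : choiceType} (Q : T * U -> R) : \bar R :=
  \esum_(q in [set: T * U])
     (Q q * log2 (psum (fun t' : T => Q (t', q.2)) / Q q))%:E.

Definition mi {T U : choiceType} (Q : T * U -> R) : \bar R :=
  (ent (fun t : T => psum (fun u : U => Q (t, u))) - cent Q)%E.

(** Markov chain A -> B -> C for a joint pmf Q on A * B * C:
    p(a,b,c) p(b) = p(a,b) p(b,c). *)
Definition markov {T1 T2 T3 : choiceType} (Q : T1 * T2 * T3 -> R) : Prop :=
  forall a b c,
    Q (a, b, c) * psum (fun ac : T1 * T3 => Q (ac.1, b, ac.2))
    = psum (fun c' : T3 => Q (a, b, c')) * psum (fun a' : T1 => Q (a', b, c)).

(** A process over the finite alphabet A, given by its finite-dimensional
    distributions: px s = Pr[X_1^{|s|} = s]. *)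
Record process (A : finType) := Process {
  px : seq A -> R;
  px_ge0 : forall s, 0 <= px s;
  px_nil : px [::] = 1;
  px_cons : forall s, px s = \sum_(a : A) px (rcons s a) }.

Record channel (A : finType) (O : choiceType) := Channel {
  chan : seq A -> O -> R;
  chan_ge0 : forall x o, 0 <= chan x o;
  chan_sum1 : forall x, \esum_(o in [set: O]) (chan x o)%:E = 1%E }.

Variable A : finType.

Definition block (b i : nat) (x : seq A) : seq A := take b (drop (i * b) x).

Definition blocks (b t : nat) (x : seq A) : seq (seq A) :=
  [seq block b i x | i <- iota 0 t].

Definition block_independent (X : process A) : Prop :=
  exists b : nat, (0 < b)%N /\
    forall (t : nat) (x : seq A), (0 < t)%N -> size x = (t * b)%N ->
      px X x = \prod_(i < t) px X (block b i x).

Definition pXn (X : process A) (n : nat) (x : seq A) : R :=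
  if size x == n then px X x else 0.

Variable O : choiceType.

Definition indep_out (Z : channel A O) (xs : seq (seq A)) (os : seq O) : R :=
  if size os == size xs then \prod_(p <- zip xs os) chan Z p.1 p.2 else 0.

Definition joint_n (X : process A) (Z : channel A O) (n : nat) (p : seq A * O) : R :=
  pXn X n p.1 * chan Z p.1 p.2.

Definition info_rate (X : process A) (Z : channel A O) : \bar R :=
  limn_einf (fun n : nat => mi (joint_n X Z n.+1) * ((n.+1)%:R^-1)%:E)%E.

Definition out_n (X : process A) (Z : channel A O) (n : nat) (z : O) : R :=
  psum (fun x : seq A => joint_n X Z n (x, z)).

(** Coupling of (X_1^n, Z(X_1^n), W, (Z(pieces))) with
    X_1^n -> Z(X_1^n), W -> (Z(piece_1), ..., Z(piece_k)) and H(W) <= bound,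
    where the pieces of x are [pieces x] and the Z(piece_i) are
    independent applications of Z. *)
Definition refine_coupling (X : process A) (Z : channel A O) (n : nat)
    (pieces : seq A -> seq (seq A)) (bound : R) : Prop :=
  exists Q : seq A * (O * nat) * seq O -> R,
    is_pmf Q /\
    (forall x z, psum (fun wc : nat * seq O => Q (x, (z, wc.1), wc.2))
                 = joint_n X Z n (x, z)) /\
    (forall x zs, psum (fun zw : O * nat => Q (x, zw, zs))
                 = pXn X n x * indep_out Z (pieces x) zs) /\
    markov Q /\
    (ent (fun w : nat => psum (fun r : seq A * O * seq O => Q (r.1.1, (r.1.2, w), r.2)))
       <= bound%:E)%E.

(** Coupling of (X_1^n, (Z(X_1^m), Z(X_{m+1}^n)), Z(X_1^n)) with
    X_1^n -> Z(X_1^m), Z(X_{m+1}^n) -> Z(X_1^n). *)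
Definition merge_coupling (X : process A) (Z : channel A O) (n m : nat) : Prop :=
  exists Q : seq A * seq O * O -> R,
    is_pmf Q /\
    (forall x zs, psum (fun z : O => Q (x, zs, z))
                 = pXn X n x * indep_out Z [:: take m x; drop m x] zs) /\
    (forall x z, psum (fun zs : seq O => Q (x, zs, z)) = joint_n X Z n (x, z)) /\
    markov Q.

(** Condition (5) for given X, b, t: a Y with
    X_1^{tb} -> (Z(block_1), ..., Z(block_t)) -> Y and a deterministic phi with
    Z(X_1^{tb}) = phi(blocks outputs, Y), all fibres (on the support) of size
    at most 2^{bound}. *)
Definition determ_merge (X : process A) (Z : channel A O) (b t : nat) (bound : R) : Prop :=
  exists (Q : seq A * seq O * nat -> R) (phi : seq O * nat -> O),
    is_pmf Q /\
    (forall x zs, psum (fun y : nat => Q (x, zs, y))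
                 = pXn X (t * b) x * indep_out Z (blocks b t x) zs) /\
    markov Q /\
    (forall x z, psum (fun p : seq O * nat => if phi p == z then Q (x, p.1, p.2) else 0)
                 = joint_n X Z (t * b) (x, z)) /\
    (forall z, exists s : seq (seq O * nat),
        (forall p, phi p = z -> 0 < psum (fun x : seq A => Q (x, p.1, p.2)) -> p \in s) /\
        (size s)%:R <= powR 2 bound).

End Info.

Definition little_o_id (R : realType) (a : nat -> R) : Prop :=
  ((fun m : nat => a m / m%:R) : R^nat) @ \oo --> (0 : R^o).

Definition admissible (R : realType) (A : finType) (O O' : choiceType)
    (Z : channel R A O) (Zs : channel R A O') : Prop :=
  (* (1) *)
  (exists c : R, 0 < c /\ forall (X : process R A) (n : nat), (0 < n)%N ->
       (ent (out_n X Zs n) <= (c * n%:R)%:E)%E) /\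
  (* (2) *)
  (forall X : process R A, info_rate X Z = info_rate X Zs) /\
  (* (3) *)
  (forall (X : process R A) (m n : nat), (1 <= m)%N -> (m <= n)%N ->
       merge_coupling X Zs n m) /\
  (* (4a) *)
  (forall tau : nat, (1 <= tau)%N ->
     exists gamma : nat -> R,
       {homo gamma : i j / (i <= j)%N >-> i <= j} /\
       little_o_id gamma /\
       cvg ((series (fun m : nat => gamma m.+1 / (m.+1)%:R ^+ 2) : nat -> R) @ \oo) /\
       forall (X : process R A) (n : nat), (tau <= n)%N ->
         refine_coupling X Zs n (fun x => [:: take tau x; drop tau x]) (gamma n) /\
         refine_coupling X Zs n (fun x => [:: take (n - tau) x; drop (n - tau) x]) (gamma n)) /\
  (* (4b) *)
  (exists alpha : nat -> R, little_o_id alpha /\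
     forall (X : process R A) (b t : nat), (0 < b)%N -> (0 < t)%N ->
       refine_coupling X Zs (t * b) (blocks b t) (t%:R * alpha b)) /\
  (* (5) *)
  (exists beta : nat -> R, little_o_id beta /\
     forall (X : process R A) (b t : nat), (0 < b)%N -> (0 < t)%N ->
       determ_merge X Zs b t (t%:R * beta b)).

(* Main.v *)
Require Import Defs.
From HB Require Import structures.
From mathcomp Require Import all_boot all_order all_algebra.
From mathcomp Require Import all_classical all_reals all_analysis.
From mathcomp Require Import ring lra.
Import Order.TTheory GRing.Theory Num.Theory numFieldNormedType.Exports.
Local Open Scope classical_set_scope.
Local Open Scope ring_scope.
Set Implicit Arguments. Unset Strict Implicit. Unset Printing Implicit Defensive.
Section ES.
Variable R : realType.
Local Open Scope ereal_scope.

Lemma esum_single (T : choiceType) (a : T -> \bar R) (t0 : T) :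
  (forall t, t != t0 -> a t = 0) -> 0 <= a t0 ->
  \esum_(t in [set: T]) a t = a t0.
Proof.
move=> a0 a0ge; rewrite -(esum_set1 a0ge) [RHS]esum_mkcond.
apply: eq_esum => t _; case: ifPn => // h; apply: a0; apply/eqP => e.
by move/negP: h; apply; rewrite e; apply/mem_set.
Qed.

Lemma esumZl (T : choiceType) (c : R) (a : T -> \bar R) :
  (0 <= c)%R -> (forall t, 0 <= a t) ->
  \esum_(t in [set: T]) (c%:E * a t) = c%:E * \esum_(t in [set: T]) a t.
Proof.
move=> c0 a0; have [->|cpos] := eqVneq c 0%R.
  by rewrite mul0e esum1// => t _; rewrite mul0e.
have cgt : (0 < c)%R by rewrite lt_def cpos.
apply/eqP; rewrite eq_le; apply/andP; split.
  apply: ge_ereal_sup => _ [X [finX _] <-] /=.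
  rewrite -ge0_mule_fsumr//; apply: lee_wpmul2l; first by rewrite lee_fin.
  by apply: ereal_sup_ubound; exists X.
have h : \esum_(t in [set: T]) a t <= c^-1%:E * \esum_(t in [set: T]) (c%:E * a t).
  apply: ge_ereal_sup => _ [X [finX _] <-] /=.
  have -> : \sum_(i \in X) a i = c^-1%:E * \sum_(i \in X) (c%:E * a i).
    rewrite -ge0_mule_fsumr// ?ge0_mule_fsumr//; last by move=> t; rewrite mule_ge0.
    by apply: eq_fsbigr => t _; rewrite muleA -EFinM mulVf// mul1e.
  apply: lee_wpmul2l; first by rewrite lee_fin invr_ge0.
  by apply: ereal_sup_ubound; exists X.
apply: (le_trans (lee_wpmul2l _ h)); first by rewrite lee_fin.
by rewrite muleA -EFinM mulfV// mul1e.
Qed.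

Lemma esumZr (T : choiceType) (c : R) (a : T -> \bar R) :
  (0 <= c)%R -> (forall t, 0 <= a t) ->
  \esum_(t in [set: T]) (a t * c%:E) = (\esum_(t in [set: T]) a t) * c%:E.
Proof.
move=> c0 a0; rewrite [RHS]muleC -esumZl//; apply: eq_esum => t _; exact: muleC.
Qed.

Lemma esum_pair (T U : choiceType) (a : T * U -> \bar R) : (forall p, 0 <= a p) ->
  \esum_(p in [set: T * U]) a p =
  \esum_(t in [set: T]) \esum_(u in [set: U]) a (t, u).
Proof.
move=> a0; rewrite esum_esum//.
have -> : [set: T] `*`` (fun=> [set: U]) = [set: T * U].
  by apply/seteqP; split => // -[x y].
by apply: eq_esum => -[].
Qed.

Lemma esum_bij (T U : choiceType) (e : T -> U) (a : U -> \bar R) :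
  bijective e -> \esum_(u in [set: U]) a u = \esum_(t in [set: T]) a (e t).
Proof. by move=> be; apply: reindex_esum; rewrite setTT_bijective. Qed.

Lemma esum_swap (T U : choiceType) (a : T -> U -> \bar R) :
  (forall t u, 0 <= a t u) ->
  \esum_(t in [set: T]) \esum_(u in [set: U]) a t u =
  \esum_(u in [set: U]) \esum_(t in [set: T]) a t u.
Proof.
move=> a0; rewrite -(@esum_pair _ _ (fun p : T * U => a p.1 p.2))//.
rewrite -(@esum_pair _ _ (fun p : U * T => a p.2 p.1))//.
rewrite (@esum_bij _ _ (fun p : U * T => (p.2, p.1)))//.
by exists (fun p : T * U => (p.2, p.1)) => -[].
Qed.

Lemma esum_reindex_sub (T U : choiceType) (D : set T) (e : T -> U) (a : U -> \bar R) :
  {in D &, injective e} ->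
  (forall u, a u != 0 -> exists2 t, D t & e t = u) ->
  \esum_(u in [set: U]) a u = \esum_(t in D) a (e t).
Proof.
move=> ei asupp.
have -> : \esum_(u in [set: U]) a u = \esum_(u in e @` D) a u.
  rewrite [RHS]esum_mkcond; apply: eq_esum => u _.
  case: ifPn => // /negP uD; have [//|/asupp [t Dt etu]] := eqVneq (a u) 0.
  by exfalso; apply: uD; rewrite inE; exists t.
apply: reindex_esum; split => //; by move=> t Dt; exists t.
Qed.

Lemma fin_esum_le1 (T : choiceType) (a : T -> \bar R) (S : set T) :
  (forall t, 0 <= a t) -> \esum_(t in S) a t <= 1 -> \esum_(t in S) a t \is a fin_num.
Proof.
move=> a0 le1; rewrite ge0_fin_numE ?(le_lt_trans le1) ?ltry//.
by apply: esum_ge0 => t _.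
Qed.

Lemma esum_ge_term (T : choiceType) (a : T -> \bar R) (t0 : T) :
  (forall t, 0 <= a t) -> a t0 <= \esum_(t in [set: T]) a t.
Proof.
move=> a0; apply: esum_ge; exists [set t0]; first by split => //; exact: finite_set1.
by rewrite fsbig_set1.
Qed.

End ES.

Lemma log2_le (R : realType) (x y : R) : 0 < x -> x <= y -> log2 x <= log2 y.
Proof.
move=> x0 xy; rewrite /log2 ler_pM2r ?invr_gt0; last by apply: ln_gt0; rewrite ltr1n.
by rewrite ler_ln // posrE (lt_le_trans x0).
Qed.

Section Logs.
Variable R : realType.

Lemma ln2_gt0 : (0 : R) < ln 2.
Proof. by apply: ln_gt0; rewrite ltr1n. Qed.

Lemma log2_0 : log2 (0 : R) = 0.
Proof. by rewrite /log2 ln0 // mul0r. Qed.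

Lemma log2_ge0 (x : R) : 1 <= x -> 0 <= log2 x.
Proof. by move=> x1; apply: divr_ge0; [exact: ln_ge0 | exact: ltW ln2_gt0]. Qed.

Lemma log2_le0 (x : R) : x <= 1 -> log2 x <= 0.
Proof. by move=> x1; rewrite /log2 pmulr_lle0 ?invr_gt0 ?ln2_gt0 // ln_le0. Qed.

Lemma log2M (x y : R) : 0 < x -> 0 < y -> log2 (x * y) = log2 x + log2 y.
Proof. by move=> x0 y0; rewrite /log2 lnM ?posrE // mulrDl. Qed.

Lemma log2V (x : R) : 0 <= x -> log2 (x^-1) = - log2 x.
Proof.
rewrite le_eqVlt => /orP[/eqP <-|x0]; first by rewrite invr0 log2_0 oppr0.
by rewrite /log2 lnV ?posrE // mulNr.
Qed.

Lemma log2_sub1 (x : R) : 0 < x -> log2 x <= (x - 1) / ln 2.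
Proof.
move=> x0; rewrite /log2 ler_pM2r ?invr_gt0 ?ln2_gt0 //.
have := @le_ln1Dx R (x - 1); rewrite addrCA subrr addr0; apply.
by rewrite ltrBrDl; lra.
Qed.

Lemma log2_ratio_ge0 (a b : R) : 0 <= b -> b <= a -> 0 <= log2 (a / b).
Proof.
rewrite le_eqVlt => /orP[/eqP <-|b0] ba; first by rewrite invr0 mulr0 log2_0.
by apply: log2_ge0; rewrite ler_pdivlMr // mul1r.
Qed.

Lemma ent_term_ge0 (p : R) : 0 <= p -> p <= 1 -> 0 <= - (p * log2 p).
Proof.
move=> p0 p1; rewrite oppr_ge0 mulr_ge0_le0 //; exact: log2_le0.
Qed.

End Logs.

Section Omega.
Variables (R : realType) (W : choiceType) (Q : W -> R).
Hypothesis Q0 : forall w, 0 <= Q w.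
Hypothesis Q1 : (\esum_(w in [set: W]) (Q w)%:E = 1)%E.

Definition pm (T : choiceType) (f : W -> T) (t : T) : R :=
  psum (fun w => if f w == t then Q w else 0).
Definition at_ (T : choiceType) (f : W -> T) (w : W) : R := pm f (f w).

Definition fib (T : choiceType) (f : W -> T) t w := if f w == t then Q w else 0.

Lemma fib_ge0 (T : choiceType) (f : W -> T) t w : 0 <= fib f t w.
Proof. by rewrite /fib; case: ifP. Qed.

Lemma fib_leQ (T : choiceType) (f : W -> T) t w : fib f t w <= Q w.
Proof. by rewrite /fib; case: ifP. Qed.

Lemma esum_fib_le1 (T : choiceType) (f : W -> T) t :
  (\esum_(w in [set: W]) (fib f t w)%:E <= 1)%E.
Proof. by rewrite -Q1; apply: le_esum => w _; rewrite lee_fin fib_leQ. Qed.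

Lemma pmE (T : choiceType) (f : W -> T) t : (pm f t)%:E = \esum_(w in [set: W]) (fib f t w)%:E.
Proof.
rewrite /pm /psum fineK //; apply: fin_esum_le1; last exact: esum_fib_le1.
by move=> w; rewrite lee_fin fib_ge0.
Qed.

Lemma pm_ge0 (T : choiceType) (f : W -> T) t : 0 <= pm f t.
Proof. by rewrite -lee_fin pmE; apply: esum_ge0 => w _; rewrite lee_fin fib_ge0. Qed.

Lemma pm_le1 (T : choiceType) (f : W -> T) t : pm f t <= 1.
Proof. by rewrite -lee_fin pmE; exact: esum_fib_le1. Qed.

Lemma marg (T : choiceType) (f : W -> T) (h : T -> R) : (forall t, 0 <= h t) ->
  \esum_(w in [set: W]) (Q w * h (f w))%:E = \esum_(t in [set: T]) (pm f t * h t)%:E.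
Proof.
move=> h0.
transitivity (\esum_(t in [set: T]) \esum_(w in [set: W]) (fib f t w * h t)%:E).
  rewrite (@esum_swap _ T W (fun t w => (fib f t w * h t)%:E)); last first.
    by move=> t w; rewrite lee_fin mulr_ge0 // fib_ge0.
  apply: eq_esum => w _; rewrite (@esum_single _ _ _ (f w)).
  - by rewrite /fib eqxx.
  - by move=> t ne; rewrite /fib eq_sym (negbTE ne) mul0r.
  - by rewrite lee_fin mulr_ge0 // fib_ge0.
apply: eq_esum => t _; rewrite EFinM pmE -esumZr //.
by move=> w; rewrite lee_fin fib_ge0.
Qed.

Lemma pm_sum (T : choiceType) (f : W -> T) : \esum_(t in [set: T]) (pm f t)%:E = 1%E.
Proof.
rewrite -Q1; have := @marg T f (fun=> 1) (fun=> ler01).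
by under eq_esum do rewrite mulr1; under [in X in _ = X -> _]eq_esum do rewrite mulr1.
Qed.

Lemma at_equiv (T U : choiceType) (F : W -> T) (G : W -> U) w :
  (forall w', (F w' == F w) = (G w' == G w)) -> at_ F w = at_ G w.
Proof.
by move=> e; rewrite /at_ /pm; congr psum; apply: funext => w'; rewrite e.
Qed.

Lemma at_le (T U : choiceType) (F : W -> T) (G : W -> U) w :
  (forall w', F w' == F w -> G w' == G w) -> at_ F w <= at_ G w.
Proof.
move=> e; rewrite -lee_fin /at_ !pmE; apply: le_esum => w' _; rewrite lee_fin /fib.
by case: ifPn => [/e -> //|_]; case: ifP.
Qed.

Lemma at_id w : at_ (fun w => w) w = Q w.
Proof.
apply/eqP; rewrite -(@eqe R) /at_ pmE (@esum_single _ _ _ w).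
- by rewrite /fib eqxx.
- by move=> w' ne; rewrite /fib (negbTE ne).
- by rewrite lee_fin fib_ge0.
Qed.

Lemma at_geQ (T : choiceType) (F : W -> T) w : Q w <= at_ F w.
Proof. by rewrite -at_id; apply: at_le => w' /eqP ->. Qed.

Lemma at_ge0 (T : choiceType) (F : W -> T) w : 0 <= at_ F w.
Proof. exact: pm_ge0. Qed.

Lemma at_le1 (T : choiceType) (F : W -> T) w : at_ F w <= 1.
Proof. exact: pm_le1. Qed.

Lemma pm_sum_fst (T V : choiceType) (f : W -> T) (g : W -> V) v :
  \esum_(t in [set: T]) (pm (fun w => (f w, g w)) (t, v))%:E = (pm g v)%:E.
Proof.
under eq_esum do rewrite pmE.
rewrite (@esum_swap _ T W (fun t w => (fib (fun w => (f w, g w)) (t, v) w)%:E)); last first.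
  by move=> t w; rewrite lee_fin fib_ge0.
rewrite pmE; apply: eq_esum => w _; rewrite (@esum_single _ _ _ (f w)).
- by rewrite /fib xpair_eqE eqxx.
- by move=> t ne; rewrite /fib xpair_eqE eq_sym (negbTE ne).
- by rewrite lee_fin fib_ge0.
Qed.

Lemma pm_sum_snd (T V : choiceType) (f : W -> T) (g : W -> V) t :
  \esum_(v in [set: V]) (pm (fun w => (f w, g w)) (t, v))%:E = (pm f t)%:E.
Proof.
under eq_esum do rewrite pmE.
rewrite (@esum_swap _ V W (fun v w => (fib (fun w => (f w, g w)) (t, v) w)%:E)); last first.
  by move=> v w; rewrite lee_fin fib_ge0.
rewrite pmE; apply: eq_esum => w _; rewrite (@esum_single _ _ _ (g w)).
- by rewrite /fib xpair_eqE eqxx andbT.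
- by move=> v ne; rewrite /fib xpair_eqE [g w == v]eq_sym (negbTE ne) andbF.
- by rewrite lee_fin fib_ge0.
Qed.

Lemma pm_fiber (T V : choiceType) (F : W -> T) (e : T -> V -> W) t :
  (forall v, F (e t v) = t) -> injective (e t) ->
  (forall w, F w = t -> exists v, e t v = w) ->
  pm F t = psum (fun v => Q (e t v)).
Proof.
move=> Fe ei es; rewrite /pm /psum; congr fine.
rewrite (@esum_reindex_sub _ _ _ [set: V] (e t)).
- by apply: eq_esum => v _; rewrite Fe eqxx.
- by move=> x y _ _; apply: ei.
- move=> w; have [Fw _|ne] := eqVneq (F w) t.
    by have [v ev] := es w Fw; exists v.
  by rewrite eqxx.
Qed.


Definition Hx (T : choiceType) (f : W -> T) : \bar R :=
  \esum_(w in [set: W]) (Q w * - log2 (at_ f w))%:E.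
Definition Hc (T U : choiceType) (f : W -> T) (g : W -> U) : \bar R :=
  \esum_(w in [set: W]) (Q w * log2 (at_ g w / at_ (fun w => (f w, g w)) w))%:E.

Lemma Hx_term_ge0 (T : choiceType) (f : W -> T) w : 0 <= Q w * - log2 (at_ f w).
Proof. by rewrite mulr_ge0 // oppr_ge0 log2_le0 // at_le1. Qed.

Lemma Hc_term_ge0 (T U : choiceType) (f : W -> T) (g : W -> U) w :
  0 <= Q w * log2 (at_ g w / at_ (fun w => (f w, g w)) w).
Proof.
rewrite mulr_ge0 // log2_ratio_ge0 ?at_ge0 //.
by apply: at_le => w'; rewrite xpair_eqE => /andP[].
Qed.

Lemma Hx_ge0 (T : choiceType) (f : W -> T) : (0 <= Hx f)%E.
Proof. by apply: esum_ge0 => w _; rewrite lee_fin Hx_term_ge0. Qed.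

Lemma Hc_ge0 (T U : choiceType) (f : W -> T) (g : W -> U) : (0 <= Hc f g)%E.
Proof. by apply: esum_ge0 => w _; rewrite lee_fin Hc_term_ge0. Qed.

Lemma at_gt0 (T : choiceType) (F : W -> T) w : 0 < Q w -> 0 < at_ F w.
Proof. by move=> /lt_le_trans; apply; apply: at_geQ. Qed.

Lemma core (T U V : choiceType) (f : W -> T) (g : W -> U) (k : W -> V) :
  (\esum_(w in [set: W]) (Q w * log2 (at_ (fun w => (g w, k w)) w /
      at_ (fun w => (f w, (g w, k w))) w))%:E <= Hc f k)%E.
Proof.
set F3 := (fun w => (f w, (g w, k w))).
set G := (fun w => (g w, k w)).
set C := (fun w => (f w, k w)).
set c0 := (ln (2:R))^-1.
have c0gt : 0 < c0 by rewrite invr_gt0 ln2_gt0.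
pose r w := Q w * (at_ G w * at_ C w / (at_ F3 w * at_ k w)).
have r0 w : 0 <= r w.
  by rewrite /r mulr_ge0 // divr_ge0 ?mulr_ge0 ?at_ge0.
have tw w : Q w * log2 (at_ G w / at_ F3 w) + Q w * c0 <=
            Q w * log2 (at_ k w / at_ C w) + r w * c0.
  have [Qw0|Qwn] := eqVneq (Q w) 0.
    by rewrite /r Qw0 !mul0r addr0.
  have Qp : 0 < Q w by rewrite lt_def Qwn Q0.
  have ap := at_gt0 G Qp; have cp := at_gt0 C Qp.
  have qp := at_gt0 F3 Qp; have dp := at_gt0 k Qp.
  set a := at_ G w; set c := at_ C w; set q := at_ F3 w; set d := at_ k w.
  have yp : 0 < a * c / (q * d) by rewrite divr_gt0 ?mulr_gt0.
  have -> : a / q = (d / c) * (a * c / (q * d)).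
    by field; rewrite ?(gt_eqF qp) ?(gt_eqF cp) ?(gt_eqF dp).
  rewrite log2M ?divr_gt0 ?mulr_gt0 //.
  have := log2_sub1 yp; rewrite -/c0 => hl.
  rewrite /r -/a -/c -/q -/d.
  nra.
pose S := \esum_(w in [set: W]) (r w)%:E.
have S1 : (S <= 1)%E.
  pose h (x : T * (U * V)) := pm G x.2 * pm C (x.1, x.2.2) /
                               (pm F3 x * pm k x.2.2).
  have h0 x : 0 <= h x by rewrite /h divr_ge0 ?mulr_ge0 ?pm_ge0.
  have -> : S = \esum_(w in [set: W]) (Q w * h (F3 w))%:E by [].
  rewrite marg //.
  apply: (@le_trans _ _ (\esum_(x in [set: T * (U * V)])
      (pm G x.2 * pm C (x.1, x.2.2) / pm k x.2.2)%:E)).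
    apply: le_esum => x _; rewrite lee_fin /h.
    set p := pm F3 x; set A := pm G x.2 * pm C (x.1, x.2.2); set D := pm k x.2.2.
    have A0 : 0 <= A by rewrite mulr_ge0 ?pm_ge0.
    have [->|pn] := eqVneq p 0; first by rewrite mul0r divr_ge0 ?pm_ge0.
    have [->|Dn] := eqVneq D 0; first by rewrite !mulr0 invr0 !mulr0.
    suff -> : p * (A / (p * D)) = A / D by [].
    by field; rewrite pn Dn.
  rewrite esum_pair; last by move=> x; rewrite lee_fin divr_ge0 ?mulr_ge0 ?pm_ge0.
  rewrite esum_swap /=; last by move=> t uv; rewrite lee_fin divr_ge0 ?mulr_ge0 ?pm_ge0.
  rewrite -(pm_sum G).
  apply: le_esum => uv _.
  have e t : (pm G uv * pm C (t, uv.2) / pm k uv.2)%:E =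
      ((pm C (t, uv.2))%:E * (pm G uv / pm k uv.2)%:E)%E.
    by rewrite -EFinM mulrAC mulrC.
  rewrite (eq_esum (fun t _ => e t)).
  rewrite esumZr; last by move=> t; rewrite lee_fin pm_ge0.
    2: by rewrite mulr_ge0 ?invr_ge0 ?pm_ge0.
  rewrite (pm_sum_fst f k) -EFinM lee_fin.
  have [->|Dn] := eqVneq (pm k uv.2) 0; first by rewrite mul0r pm_ge0.
  by rewrite mulrA mulrC mulrA mulVf // mul1r.
have t3 w : 0 <= Q w * log2 (at_ G w / at_ F3 w).
  rewrite mulr_ge0 // log2_ratio_ge0 ?at_ge0 //.
  by apply: at_le => w'; rewrite /F3 /G !xpair_eqE => /andP[].
have tc w : 0 <= Q w * c0 by rewrite mulr_ge0 // ltW.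
have trc w : 0 <= r w * c0 by rewrite mulr_ge0 // ltW.
have sc : \esum_(w in [set: W]) (Q w * c0)%:E = c0%:E.
  by rewrite (eq_esum (fun w _ => EFinM _ _)) esumZr ?Q1 ?mul1e // ?ltW // => w; rewrite lee_fin.
have sr : \esum_(w in [set: W]) (r w * c0)%:E = (S * c0%:E)%E.
  by rewrite (eq_esum (fun w _ => EFinM _ _)) esumZr // ?ltW // => w; rewrite lee_fin.
have := @le_esum _ _ [set: W] _ _ (fun w (_ : [set: W] w) => (tw w : (_%:E <= _%:E)%E)).
rewrite (eq_esum (fun w _ => EFinD _ _)) esumD; last 2 first.
- by move=> w _; rewrite lee_fin.
- by move=> w _; rewrite lee_fin.
rewrite [X in (_ <= X)%E -> _](eq_esum (fun w _ => EFinD _ _)) esumD; last 2 first.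
- by move=> w _; rewrite lee_fin Hc_term_ge0.
- by move=> w _; rewrite lee_fin.
rewrite sc sr => h1.
have h2 : (Hc f k + S * c0%:E <= Hc f k + c0%:E)%E.
  rewrite leeD2l // -[leRHS]mul1e lee_wpmul2r // lee_fin ltW //.
by rewrite -(@leeD2rE _ c0%:E) // (le_trans h1 h2).
Qed.


Lemma Hc_le_Hx (T U : choiceType) (f : W -> T) (g : W -> U) : (Hc f g <= Hx f)%E.
Proof.
have := core f g (fun=> tt).
have -> : Hc f (fun=> tt) = Hx f.
  apply: eq_esum => w _; congr (_ * _)%:E.
  have -> : at_ (fun=> tt) w = 1.
    rewrite /at_ /pm /fib /psum.
    by under eq_esum do rewrite eqxx; rewrite Q1.
  rewrite div1r log2V ?at_ge0 //; congr (- log2 _).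
  by apply: at_equiv => w'; rewrite xpair_eqE eqxx andbT.
apply: le_trans; rewrite le_eqVlt; apply/orP; left; apply/eqP.
apply: eq_esum => w _; congr (_ * log2 (_ / _))%:E.
- by apply: at_equiv => w'; rewrite xpair_eqE eqxx andbT.
- by apply: at_equiv => w'; rewrite !xpair_eqE eqxx andbT.
Qed.

Lemma Hc_chain (T U V : choiceType) (f : W -> T) (g : W -> U) (h : W -> V) :
  (Hc f g <= Hc f (fun w => (g w, h w)) + Hc h g)%E.
Proof.
rewrite /Hc -esumD; last 2 first.
- by move=> w _; rewrite lee_fin (Hc_term_ge0 f (fun w => (g w, h w))).
- by move=> w _; rewrite lee_fin Hc_term_ge0.
apply: le_esum => w _; rewrite -EFinD lee_fin -mulrDr.
have [Qw0|Qwn] := eqVneq (Q w) 0; first by rewrite Qw0 !mul0r.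
have Qp : 0 < Q w by rewrite lt_def Qwn Q0.
rewrite ler_pM2l //.
set a := at_ g w; set b := at_ (fun w => (f w, g w)) w.
set c := at_ (fun w => (g w, h w)) w; set d := at_ (fun w => (f w, (g w, h w))) w.
set e := at_ (fun w => (h w, g w)) w.
have ce : c = e by apply: at_equiv => w'; rewrite !xpair_eqE andbC.
have db : d <= b by apply: at_le => w'; rewrite !xpair_eqE => /andP[-> /andP[->]].
have ap : 0 < a by apply: at_gt0. have bp : 0 < b by apply: at_gt0.
have cp : 0 < c by apply: at_gt0. have dp : 0 < d by apply: at_gt0.
rewrite -log2M ?divr_gt0 -?ce //.
have -> : c / d * (a / c) = a / d by field; rewrite !gt_eqF.
apply: log2_le; first by rewrite divr_gt0.
by rewrite ler_pM2l // lef_pV2 // posrE.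
Qed.

Lemma cent_pm (T U : choiceType) (f : W -> T) (g : W -> U) :
  cent (pm (fun w => (f w, g w))) = Hc f g.
Proof.
have ps u : psum (fun t' => pm (fun w => (f w, g w)) (t', u)) = pm g u.
  by rewrite /psum pm_sum_fst.
rewrite /cent; under eq_esum do rewrite ps.
rewrite -(@marg _ (fun w => (f w, g w)) (fun q => log2 (pm g q.2 / pm (fun w => (f w, g w)) q))) //.
move=> q; apply: log2_ratio_ge0; first exact: pm_ge0.
rewrite -lee_fin -(pm_sum_fst f g); case: q => t u /=.
by apply: (@esum_ge_term _ _ (fun t' => (pm (fun w => (f w, g w)) (t', u))%:E) t) => t'; rewrite lee_fin pm_ge0.
Qed.

Lemma ent_pm (T : choiceType) (f : W -> T) : ent (pm f) = Hx f.
Proof.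
rewrite /ent /Hx (@marg _ f (fun t => - log2 (pm f t))); last first.
  by move=> t; rewrite oppr_ge0 log2_le0 // pm_le1.
by apply: eq_esum => t _; rewrite mulrN.
Qed.

Lemma mi_pm (T U : choiceType) (f : W -> T) (g : W -> U) :
  mi (pm (fun w => (f w, g w))) = (Hx f - Hc f g)%E.
Proof.
rewrite /mi cent_pm -ent_pm; congr (ent _ - _)%E; apply: funext => t.
by rewrite /psum pm_sum_snd.
Qed.

End Omega.

Section MarkovLemma.
Variables (R : realType) (T1 T2 T3 : choiceType) (Q : T1 * T2 * T3 -> R).
Hypothesis Q0 : forall w, 0 <= Q w.
Hypothesis Q1 : (\esum_(w in [set: T1 * T2 * T3]) (Q w)%:E = 1)%E.
Hypothesis hM : Defs.markov Q.

Lemma markov_Hc :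
  Hc Q (fun w => w.1.1) (fun w => w.1.2) =
  Hc Q (fun w => w.1.1) (fun w => (w.1.2, w.2)).
Proof.
apply: eq_esum => w _; congr EFin.
have [Qw0|Qwn] := eqVneq (Q w) 0; first by rewrite Qw0 !mul0r.
have Qp : 0 < Q w by rewrite lt_def Qwn Q0.
congr (_ * log2 _).
have e1 : at_ Q (fun w => w.1.2) w = psum (fun ac : T1 * T3 => Q (ac.1, w.1.2, ac.2)).
  apply: (@pm_fiber _ _ Q _ _ _ (fun b ac => (ac.1, b, ac.2))) => //.
  - by move=> [a c] [a' c'] /= [-> ->].
  - by move=> [[a b] c] /= <-; exists (a, c).
have e2 : at_ Q (fun w => (w.1.1, w.1.2)) w = psum (fun c => Q (w.1.1, w.1.2, c)).
  apply: (@pm_fiber _ _ Q _ _ _ (fun ab c => (ab, c))) => //.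
  - by move=> c c' [].
  - by move=> [[a b] c] /= <-; exists c.
have e3 : at_ Q (fun w => (w.1.2, w.2)) w = psum (fun a => Q (a, w.1.2, w.2)).
  apply: (@pm_fiber _ _ Q _ _ _ (fun bc a => (a, bc.1, bc.2))) => //.
  - by move=> a a' [].
  - by move=> [[a b] c] /= [<- <-]; exists a.
have e4 : at_ Q (fun w => (w.1.1, (w.1.2, w.2))) w = Q w.
  rewrite -(at_id Q0 Q1); apply: at_equiv => w'.
  by case: w w' {Qp Qwn e1 e2 e3} => [[a b] c] [[a' b'] c'] /=; rewrite !xpair_eqE andbA.
have p1 : 0 < at_ Q (fun w => w.1.2) w by apply: at_gt0.
have p2 : 0 < at_ Q (fun w => (w.1.1, w.1.2)) w by apply: at_gt0.
have p3 : 0 < at_ Q (fun w => (w.1.2, w.2)) w by apply: at_gt0.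
rewrite e4; move: p1 p2 p3; rewrite e1 e2 e3 => p1 p2 p3.
have := hM w.1.1 w.1.2 w.2; case: w Qwn Qp {e1 e2 e3 e4} p1 p2 p3 => [[a b] c] /= Qwn Qp p1 p2 p3 hm.
apply: (@mulfI _ (Q (a, b, c))); first by rewrite gt_eqF.
apply: (@mulIf _ (psum (fun c0 : T3 => Q (a, b, c0)))); first by rewrite gt_eqF.
rewrite mulrA hm; field; rewrite !gt_eqF //.
Qed.

End MarkovLemma.

Section Proc.
Variables (R : realType) (A : finType) (O : choiceType).
Variables (X : process R A) (Zs : channel R A O).

Lemma px_le1 s : px X s <= 1.
Proof.
elim/last_ind: s => [|s a IH]; first by rewrite px_nil.
apply: le_trans IH; rewrite [leRHS](px_cons X s) (bigD1 a) //= lerDl.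
by apply: sumr_ge0 => i _; exact: px_ge0.
Qed.

Lemma pXn_ge0 n x : 0 <= pXn X n x.
Proof. by rewrite /pXn; case: ifP => _ //; exact: px_ge0. Qed.

Lemma pXn_le1 n x : pXn X n x <= 1.
Proof. by rewrite /pXn; case: ifP => _ //; exact: px_le1. Qed.

Lemma joint_marg n x : psum (fun z => joint_n X Zs n (x, z)) = pXn X n x.
Proof.
rewrite /psum /joint_n /=; under eq_esum do rewrite EFinM.
rewrite esumZl ?pXn_ge0 //; last by move=> z; rewrite lee_fin chan_ge0.
by rewrite chan_sum1 mule1.
Qed.

Lemma joint_ge0 n xz : 0 <= joint_n X Zs n xz.
Proof. by rewrite /joint_n mulr_ge0 ?pXn_ge0 ?chan_ge0. Qed.

Lemma size_finite n : finite_set [set x : seq A | size x = n].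
Proof.
have -> : [set x : seq A | size x = n] = (fun t : n.-tuple A => val t) @` setT.
  apply/seteqP; split => x /=; last by move=> [t _ <-]; exact: size_tuple.
  by move=> sx; exists (Tuple (introT eqP sx)).
exact: finite_image finite_finset.
Qed.

Lemma ent_fin (T : choiceType) (p : T -> R) (S : set T) : finite_set S ->
  (forall t, ~ S t -> p t = 0) -> (forall t, 0 <= p t <= 1) -> ent p \is a fin_num.
Proof.
move=> fS p0 p01; set c0 := (ln (2:R))^-1.
have c0gt : 0 < c0 by rewrite invr_gt0 ln2_gt0.
have tb t : - (p t * log2 (p t)) <= if t \in S then c0 else 0.
  have [/andP[pt0 pt1]] := p01 t.
  case: ifPn => tS; last first.
    by rewrite p0 ?mul0r ?oppr0 // => St; move: tS; rewrite (mem_set St).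
  have [->|ptn] := eqVneq (p t) 0; first by rewrite mul0r oppr0 ltW.
  have pp : 0 < p t by rewrite lt_def ptn.
  rewrite -mulrN -log2V //; have := @log2_sub1 _ (p t)^-1; rewrite invr_gt0 => /(_ pp).
  rewrite -/c0 => h; apply: le_trans (ler_wpM2l pt0 h) _.
  rewrite mulrA mulrBr mulfV // mulr1; nra.
rewrite ge0_fin_numE; last first.
  by apply: esum_ge0 => t _; rewrite lee_fin ent_term_ge0 //; case/andP: (p01 t).
apply: (@le_lt_trans _ _ (\esum_(t in [set: T]) (if t \in S then c0 else 0)%:E)).
  by apply: le_esum => t _; rewrite lee_fin.
rewrite -(@eq_esum _ _ _ (fun t => if t \in S then c0%:E else 0)%E); last first.
  by move=> t _; case: ifP.
rewrite -esum_mkcond esum_fset //; last by move=> t _; rewrite lee_fin ltW.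
by rewrite fsumEFin // ltry.
Qed.

Lemma ent_pXn_fin n : ent (pXn X n) \is a fin_num.
Proof.
apply: (@ent_fin _ _ [set x : seq A | size x = n]); first exact: size_finite.
  by move=> x /= sx; rewrite /pXn; case: eqP.
by move=> x; rewrite pXn_ge0 pXn_le1.
Qed.

Definition Q2 n m : seq A * seq O -> R :=
  fun xs => pXn X n xs.1 * indep_out Zs [:: take m xs.1; drop m xs.1] xs.2.

End Proc.

Section Coup.
Variables (R : realType) (A : finType) (O : choiceType).
Variables (X : process R A) (Zs : channel R A O).

Lemma fin_le (x y : \bar R) : (0 <= x)%E -> (x <= y)%E -> y \is a fin_num -> x \is a fin_num.
Proof.
move=> x0 xy yf; rewrite ge0_fin_numE // (le_lt_trans xy) // ltey.
by move: yf; rewrite fin_numE => /andP[].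
Qed.

Lemma merge_le n m : merge_coupling X Zs n m ->
  [/\ mi (joint_n X Zs n) \is a fin_num, mi (Q2 X Zs n m) \is a fin_num &
      (mi (joint_n X Zs n) <= mi (Q2 X Zs n m))%E].
Proof.
rewrite /merge_coupling /is_pmf => -[Q [[Q0 Q1] [h1 [h2 hM]]]].
have pXS : pm Q (fun w => (w.1.1, w.1.2)) = Q2 X Zs n m.
  apply: funext => -[x s].
  rewrite (@pm_fiber _ _ Q _ _ _ (fun xs z => (xs, z))) //.
  - by move=> z z' [].
  - by move=> [[x' s'] z] /= <-; exists z.
have pXZ : pm Q (fun w => (w.1.1, w.2)) = joint_n X Zs n.
  apply: funext => -[x z].
  rewrite (@pm_fiber _ _ Q _ _ _ (fun xz s => (xz.1, s, xz.2))) //.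
  - by move=> s s' [].
  - by move=> [[x' s'] z'] /= [<- <-]; exists s'.
have pX : pm Q (fun w => w.1.1) = pXn X n.
  apply: funext => x; rewrite -(joint_marg X Zs n x) /psum -pXZ.
  by rewrite (pm_sum_snd Q0 Q1 (fun w => w.1.1) (fun w => w.2)).
have hx : Hx Q (fun w => w.1.1) = ent (pXn X n) by rewrite -pX (ent_pm Q0 Q1).
rewrite -pXS -pXZ !(mi_pm Q0 Q1) hx.
have fx := ent_pXn_fin X n.
have hz := Hc_le_Hx Q0 Q1 (fun w => w.1.1) (fun w => w.2).
have hs := Hc_le_Hx Q0 Q1 (fun w => w.1.1) (fun w => w.1.2).
rewrite hx in hz hs.
have fz := fin_le (Hc_ge0 Q0 Q1 _ _) hz fx.
have fs := fin_le (Hc_ge0 Q0 Q1 _ _) hs fx.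
split; rewrite ?fin_numB ?fx ?fz ?fs //.
apply: leeB => //.
rewrite (markov_Hc Q0 Q1 hM).
exact: (core Q0 Q1 (fun w => w.1.1) (fun w => w.1.2) (fun w => w.2)).
Qed.

Lemma refine_le n k g :
  refine_coupling X Zs n (fun x => [:: take k x; drop k x]) g ->
  (mi (Q2 X Zs n k) <= mi (joint_n X Zs n) + g%:E)%E.
Proof.
rewrite /refine_coupling /is_pmf => -[Q [[Q0 Q1] [h1 [h2 [hM hW]]]]].
have pXZ : pm Q (fun w => (w.1.1, w.1.2.1)) = joint_n X Zs n.
  apply: funext => -[x z].
  rewrite (@pm_fiber _ _ Q _ _ _ (fun xz (ws : nat * seq O) => (xz.1, (xz.2, ws.1), ws.2))) //.
  - by move=> [a b] [a' b'] [-> ->].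
  - by move=> [[x' [z' wv]] s] /= [<- <-]; exists (wv, s).
have pXS : pm Q (fun w => (w.1.1, w.2)) = Q2 X Zs n k.
  apply: funext => -[x s].
  rewrite (@pm_fiber _ _ Q _ _ _ (fun xs (zw : O * nat) => (xs.1, zw, xs.2))) //.
  - by move=> a b [].
  - by move=> [[x' zw] s'] /= [<- <-]; exists zw.
have pW : pm Q (fun w => w.1.2.2) =
    (fun wv => psum (fun r : seq A * O * seq O => Q (r.1.1, (r.1.2, wv), r.2))).
  apply: funext => wv.
  rewrite (@pm_fiber _ _ Q _ _ _ (fun wv (r : seq A * O * seq O) => (r.1.1, (r.1.2, wv), r.2))) //.
  - by move=> [[a b] c] [[a' b'] c'] /= [-> -> ->].
  - by move=> [[x' [z' wv']] s] /= ->; exists (x', z', s).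
rewrite -pW (ent_pm Q0 Q1) in hW.
have pX : pm Q (fun w => w.1.1) = pXn X n.
  apply: funext => x; rewrite -(joint_marg X Zs n x) /psum -pXZ.
  by rewrite (pm_sum_snd Q0 Q1 (fun w => w.1.1) (fun w => w.1.2.1)).
have hx : Hx Q (fun w => w.1.1) = ent (pXn X n) by rewrite -pX (ent_pm Q0 Q1).
rewrite -pXS -pXZ !(mi_pm Q0 Q1) hx.
have fx := ent_pXn_fin X n.
have hz := Hc_le_Hx Q0 Q1 (fun w => w.1.1) (fun w => w.1.2.1).
have hs := Hc_le_Hx Q0 Q1 (fun w => w.1.1) (fun w => w.2).
rewrite hx in hz hs.
have fz := fin_le (Hc_ge0 Q0 Q1 _ _) hz fx.
have fs := fin_le (Hc_ge0 Q0 Q1 _ _) hs fx.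
have fw : Hx Q (fun w => w.1.2.2) \is a fin_num by apply: fin_le (Hx_ge0 Q0 Q1 _) hW _.
have key : (Hc Q (fun w => w.1.1) (fun w => w.1.2.1) <=
            Hc Q (fun w => w.1.1) (fun w => w.2) + Hx Q (fun w => w.1.2.2))%E.
  apply: le_trans (Hc_chain Q0 Q1 _ _ (fun w => w.1.2.2)) _.
  apply: leeD; last exact: Hc_le_Hx.
  have -> : Hc Q (fun w => w.1.1) (fun w => (w.1.2.1, w.1.2.2)) =
            Hc Q (fun w => w.1.1) (fun w => w.1.2).
    apply: eq_esum => w _; congr (_ * log2 (_ / _))%:E.
  rewrite (markov_Hc Q0 Q1 hM).
  exact: (core Q0 Q1 (fun w => w.1.1) (fun w => w.1.2) (fun w => w.2)).
move: key hW; rewrite -(fineK fx) -(fineK fz) -(fineK fs) -(fineK fw).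
rewrite -!EFinB -!EFinD !lee_fin; lra.
Qed.

Lemma merge_facts n m : merge_coupling X Zs n m ->
  [/\ \esum_(x in [set: seq A]) (pXn X n x)%:E = 1%E,
      cent (joint_n X Zs n) \is a fin_num & (0 <= mi (joint_n X Zs n))%E].
Proof.
rewrite /merge_coupling /is_pmf => -[Q [[Q0 Q1] [h1 [h2 hM]]]].
have pXZ : pm Q (fun w => (w.1.1, w.2)) = joint_n X Zs n.
  apply: funext => -[x z].
  rewrite (@pm_fiber _ _ Q _ _ _ (fun xz s => (xz.1, s, xz.2))) //.
  - by move=> s s' [].
  - by move=> [[x' s'] z'] /= [<- <-]; exists s'.
have pX : pm Q (fun w => w.1.1) = pXn X n.
  apply: funext => x; rewrite -(joint_marg X Zs n x) /psum -pXZ.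
  by rewrite (pm_sum_snd Q0 Q1 (fun w => w.1.1) (fun w => w.2)).
have hx : Hx Q (fun w => w.1.1) = ent (pXn X n) by rewrite -pX (ent_pm Q0 Q1).
have fx := ent_pXn_fin X n.
have hz := Hc_le_Hx Q0 Q1 (fun w => w.1.1) (fun w => w.2).
rewrite hx in hz.
have fz := fin_le (Hc_ge0 Q0 Q1 _ _) hz fx.
split.
- by rewrite -pX (pm_sum Q0 Q1).
- by rewrite -pXZ (cent_pm Q0 Q1).
- rewrite -pXZ (mi_pm Q0 Q1) hx.
  by rewrite -(fineK fx) -(fineK fz) -EFinB lee_fin subr_ge0 -lee_fin !fineK.
Qed.

End Coup.

Lemma esum_D (R : realType) (T U : choiceType) (D : set T) (e : T -> U)
    (G : U -> \bar R) (H : T -> \bar R) :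
  {in D &, injective e} -> (forall u, G u != 0%E -> exists2 t, D t & e t = u) ->
  (forall t, D t -> H t = G (e t)) -> (forall t, ~ D t -> H t = 0%E) ->
  \esum_(u in [set: U]) G u = \esum_(t in [set: T]) H t.
Proof.
move=> ei es eH eH0; rewrite (esum_reindex_sub ei es) esum_mkcond.
apply: eq_esum => t _; case: ifPn => [/set_mem Dt|/negP nDt]; first by rewrite eH.
by rewrite eH0 // => Dt; apply: nDt; exact: mem_set.
Qed.

Section Prod.
Variables (R : realType) (A : finType) (O : choiceType).
Variables (X : process R A) (Zs : channel R A O).

Lemma chan_le1 x z : chan Zs x z <= 1.
Proof.
rewrite -lee_fin -(chan_sum1 Zs x).
by apply: (@esum_ge_term _ _ (fun z => (chan Zs x z)%:E) z) => z'; rewrite lee_fin chan_ge0.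
Qed.

Lemma indep2 y1 y2 z1 z2 :
  indep_out Zs [:: y1; y2] [:: z1; z2] = chan Zs y1 z1 * chan Zs y2 z2.
Proof. by rewrite /indep_out /= !big_cons big_nil mulr1. Qed.

Lemma indep2_sum y1 y2 : \esum_(s in [set: seq O]) (indep_out Zs [:: y1; y2] s)%:E = 1%E.
Proof.
rewrite (@esum_D _ _ _ setT (fun zz : O * O => [:: zz.1; zz.2]) _
   (fun zz => (chan Zs y1 zz.1 * chan Zs y2 zz.2)%:E)).
- rewrite esum_pair /=; last by move=> zz; rewrite lee_fin mulr_ge0 ?chan_ge0.
  have e1 z1 : \esum_(z2 in [set: O]) (chan Zs y1 z1 * chan Zs y2 z2)%:E = (chan Zs y1 z1)%:E.
    under eq_esum do rewrite EFinM.
    rewrite esumZl ?chan_ge0 ?chan_sum1 ?mule1 //.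
    by move=> z; rewrite lee_fin chan_ge0.
  under eq_esum do rewrite e1.
  exact: chan_sum1.
- by move=> [a b] [a' b'] _ _ /= [-> ->].
- move=> s; rewrite /indep_out; case: s => [|a [|b [|c s]]] //=; rewrite ?eqxx //.
  by move=> _; exists (a, b).
- by move=> [a b] _; rewrite indep2.
- by move=> t [].
Qed.

Lemma joint_esum k x : \esum_(z in [set: O]) (joint_n X Zs k (x, z))%:E = (pXn X k x)%:E.
Proof.
rewrite /joint_n /=; under eq_esum do rewrite EFinM.
rewrite esumZl ?pXn_ge0 //; last by move=> z; rewrite lee_fin chan_ge0.
by rewrite chan_sum1 mule1.
Qed.

Lemma pXn_size k x : pXn X k x != 0 -> size x = k.
Proof. by rewrite /pXn; case: (size x =P k) => //; rewrite eqxx. Qed.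

Section Sk.
Variable k : nat.
Hypothesis sk : \esum_(x in [set: seq A]) (pXn X k x)%:E = 1%E.

Lemma sumJ : \esum_(q in [set: seq A * O]) (joint_n X Zs k q)%:E = 1%E.
Proof.
rewrite esum_pair; last by move=> q; rewrite lee_fin joint_ge0.
by under eq_esum do rewrite joint_esum.
Qed.

Lemma esumJ z : \esum_(x in [set: seq A]) (joint_n X Zs k (x, z))%:E =
                (psum (fun x => joint_n X Zs k (x, z)))%:E.
Proof.
rewrite /psum fineK //; apply: fin_esum_le1; first by move=> x; rewrite lee_fin joint_ge0.
rewrite -sk; apply: le_esum => x _; rewrite lee_fin /joint_n /=.
by rewrite ler_piMr ?pXn_ge0 ?chan_le1.
Qed.

Lemma J_le_P x z : joint_n X Zs k (x, z) <= psum (fun x => joint_n X Zs k (x, z)).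
Proof.
rewrite -lee_fin -esumJ.
by apply: (@esum_ge_term _ _ (fun x => (joint_n X Zs k (x, z))%:E) x) => x'; rewrite lee_fin joint_ge0.
Qed.

End Sk.


Lemma ent_split (a b : R) : 0 <= a -> 0 <= b ->
  - (a * b * log2 (a * b)) = b * - (a * log2 a) + a * - (b * log2 b).
Proof.
rewrite le_eqVlt => /orP[/eqP <-|a0]; first by rewrite !mul0r !(mulr0, oppr0, addr0, mul0r).
rewrite le_eqVlt => /orP[/eqP <-|b0]; first by rewrite !(mulr0, mul0r, oppr0, addr0).
by rewrite log2M //; ring.
Qed.

Lemma esum_prod2 (T U : choiceType) (f : T -> R) (g : U -> R) :
  (forall t, 0 <= f t) -> (forall u, 0 <= g u) ->
  \esum_(u in [set: U]) (g u)%:E = 1%E ->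
  \esum_(p in [set: T * U]) (f p.1 * g p.2)%:E = \esum_(t in [set: T]) (f t)%:E.
Proof.
move=> f0 g0 g1; rewrite esum_pair /=; last by move=> p; rewrite lee_fin mulr_ge0.
apply: eq_esum => t _; under eq_esum do rewrite EFinM.
by rewrite esumZl // ?g1 ?mule1 // => u; rewrite lee_fin.
Qed.

Lemma esum_prod2' (T U : choiceType) (f : T -> R) (g : U -> R) :
  (forall t, 0 <= f t) -> (forall u, 0 <= g u) ->
  \esum_(t in [set: T]) (f t)%:E = 1%E ->
  \esum_(p in [set: T * U]) (f p.1 * g p.2)%:E = \esum_(u in [set: U]) (g u)%:E.
Proof.
move=> f0 g0 f1; rewrite esum_pair /=; last by move=> p; rewrite lee_fin mulr_ge0.
rewrite esum_swap; last by move=> t u; rewrite lee_fin mulr_ge0.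
apply: eq_esum => u _; under eq_esum do rewrite mulrC EFinM.
by rewrite esumZl // ?f1 ?mule1 // => t; rewrite lee_fin.
Qed.

Section Prod2.
Variables (n m : nat).
Hypothesis hmn : (m <= n)%N.
Hypothesis hind : forall x, pXn X n x = pXn X m (take m x) * pXn X (n - m) (drop m x).
Hypothesis s1 : \esum_(x in [set: seq A]) (pXn X m x)%:E = 1%E.
Hypothesis s2 : \esum_(x in [set: seq A]) (pXn X (n - m) x)%:E = 1%E.

Let D := [set xy : seq A * seq A | size xy.1 = m].

Lemma hind_cat x1 x2 : size x1 = m -> pXn X n (x1 ++ x2) = pXn X m x1 * pXn X (n - m) x2.
Proof. by move=> sx; rewrite hind (take_size_cat _ sx) (drop_size_cat _ sx). Qed.

Lemma p1_out x1 : size x1 <> m -> pXn X m x1 = 0.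
Proof. by rewrite /pXn; case: (size x1 =P m). Qed.

Lemma cat_inj : {in D &, injective (fun xy : seq A * seq A => xy.1 ++ xy.2)}.
Proof.
move=> [a b] [a' b'] /set_mem sa /set_mem sa' e; rewrite /D /= in sa sa' e.
have := congr1 (take m) e; rewrite (take_size_cat _ sa) (take_size_cat _ sa') => ->.
by have := congr1 (drop m) e; rewrite (drop_size_cat _ sa) (drop_size_cat _ sa') => ->.
Qed.

Lemma cat_supp x : pXn X n x != 0 -> exists2 xy, D xy & xy.1 ++ xy.2 = x.
Proof.
move=> /pXn_size sx; exists (take m x, drop m x); last exact: cat_take_drop.
by rewrite /D /= size_takel // sx.
Qed.

Lemma ent_prod : ent (pXn X n) = (ent (pXn X m) + ent (pXn X (n - m)))%E.
Proof.
rewrite /ent (@esum_D _ _ _ D (fun xy => xy.1 ++ xy.2) _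
   (fun xy => (pXn X (n - m) xy.2 * - (pXn X m xy.1 * log2 (pXn X m xy.1)) +
               pXn X m xy.1 * - (pXn X (n - m) xy.2 * log2 (pXn X (n - m) xy.2)))%:E)).
- rewrite (eq_esum (fun xy _ => EFinD _ _)) esumD; last 2 first.
  + by move=> xy _; rewrite lee_fin mulr_ge0 ?pXn_ge0 ?ent_term_ge0 ?pXn_ge0 ?pXn_le1.
  + by move=> xy _; rewrite lee_fin mulr_ge0 ?pXn_ge0 ?ent_term_ge0 ?pXn_ge0 ?pXn_le1.
  congr (_ + _)%E.
  + under eq_esum do rewrite mulrC.
    apply: (@esum_prod2 _ _ (fun x => - (pXn X m x * log2 (pXn X m x))) (pXn X (n - m))) => //.
    * by move=> x; rewrite ent_term_ge0 ?pXn_ge0 ?pXn_le1.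
    * exact: pXn_ge0.
  + apply: (@esum_prod2' _ _ (pXn X m) (fun x => - (pXn X (n - m) x * log2 (pXn X (n - m) x)))) => //.
    * exact: pXn_ge0.
    * by move=> x; rewrite ent_term_ge0 ?pXn_ge0 ?pXn_le1.
- exact: cat_inj.
- move=> x hx; apply: cat_supp; apply: contra hx => /eqP ->.
  by rewrite mul0r oppr0.
- by move=> [x1 x2] sx; rewrite /D /= in sx; rewrite hind_cat // ent_split ?pXn_ge0.
- move=> [x1 x2] /= nD; have -> : pXn X m x1 = 0 by apply: p1_out => h; apply: nD.
  by rewrite !(mul0r, mulr0, oppr0, addr0).
Qed.

Lemma Q2_cat x1 x2 z1 z2 : size x1 = m ->
  Q2 X Zs n m (x1 ++ x2, [:: z1; z2]) = joint_n X Zs m (x1, z1) * joint_n X Zs (n - m) (x2, z2).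
Proof.
move=> sx; rewrite /Q2 /= hind_cat // (take_size_cat _ sx) (drop_size_cat _ sx) indep2.
by rewrite /joint_n /=; ring.
Qed.

Lemma Q2_ge0 xs : 0 <= Q2 X Zs n m xs.
Proof.
rewrite /Q2 mulr_ge0 ?pXn_ge0 // /indep_out; case: ifP => // _.
by apply: prodr_ge0 => i _; exact: chan_ge0.
Qed.

Lemma Q2_supp xs : Q2 X Zs n m xs != 0 -> pXn X n xs.1 != 0.
Proof. by apply: contra => /eqP; rewrite /Q2 => ->; rewrite mul0r. Qed.

Lemma Q2_psum z1 z2 : psum (fun x => Q2 X Zs n m (x, [:: z1; z2])) =
  psum (fun x => joint_n X Zs m (x, z1)) * psum (fun x => joint_n X Zs (n - m) (x, z2)).
Proof.
rewrite /psum (@esum_D _ _ _ D (fun xy => xy.1 ++ xy.2) _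
   (fun xy => (joint_n X Zs m (xy.1, z1) * joint_n X Zs (n - m) (xy.2, z2))%:E)).
- rewrite esum_pair /=; last by move=> p; rewrite lee_fin mulr_ge0 ?joint_ge0.
  have e1 x1 : \esum_(x2 in [set: seq A]) (joint_n X Zs m (x1, z1) * joint_n X Zs (n - m) (x2, z2))%:E
     = ((joint_n X Zs m (x1, z1))%:E * (psum (fun x => joint_n X Zs (n - m) (x, z2)))%:E)%E.
    under eq_esum do rewrite EFinM.
    by rewrite esumZl ?joint_ge0 ?esumJ // => x; rewrite lee_fin joint_ge0.
  under eq_esum do rewrite e1.
  rewrite esumZr; last by move=> x; rewrite lee_fin joint_ge0.
    by rewrite esumJ // -EFinM.
  by rewrite /psum fine_ge0 // esum_ge0 // => x _; rewrite lee_fin joint_ge0.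
- exact: cat_inj.
- move=> x hx; apply: cat_supp; apply: (@Q2_supp (x, [:: z1; z2])).
  by apply: contra hx => /eqP ->; rewrite eqxx.
- by move=> [x1 x2] sx; rewrite /D /= in sx; rewrite Q2_cat.
- move=> [x1 x2] /= nD; rewrite /joint_n /=.
  have -> : pXn X m x1 = 0 by apply: p1_out => h; apply: nD.
  by rewrite !mul0r.
Qed.

Lemma cent_split (a b A1 B : R) : 0 <= a -> a <= A1 -> 0 <= b -> b <= B ->
  a * b * log2 (A1 * B / (a * b)) = b * (a * log2 (A1 / a)) + a * (b * log2 (B / b)).
Proof.
rewrite le_eqVlt => /orP[/eqP <-|a0] aA; first by rewrite !(mul0r, mulr0, addr0).
rewrite le_eqVlt => /orP[/eqP <-|b0] bB; first by rewrite !(mul0r, mulr0, addr0).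
have Ap : 0 < A1 by apply: lt_le_trans aA.
have Bp : 0 < B by apply: lt_le_trans bB.
have -> : A1 * B / (a * b) = (A1 / a) * (B / b) by field; rewrite !gt_eqF.
by rewrite log2M ?divr_gt0 //; ring.
Qed.

Lemma cent_prod :
  cent (Q2 X Zs n m) = (cent (joint_n X Zs m) + cent (joint_n X Zs (n - m)))%E.
Proof.
set J1 := joint_n X Zs m; set J2 := joint_n X Zs (n - m).
rewrite /cent (@esum_D _ _ _ [set p : (seq A * O) * (seq A * O) | size p.1.1 = m]
   (fun p => (p.1.1 ++ p.2.1, [:: p.1.2; p.2.2])) _
   (fun p => (J2 p.2 * (J1 p.1 * log2 (psum (fun t => J1 (t, p.1.2)) / J1 p.1)) +
              J1 p.1 * (J2 p.2 * log2 (psum (fun t => J2 (t, p.2.2)) / J2 p.2)))%:E)).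
- have t1 p : 0 <= J1 p * log2 (psum (fun t => J1 (t, p.2)) / J1 p).
    by rewrite mulr_ge0 ?joint_ge0 // log2_ratio_ge0 ?joint_ge0 //; case: p => x z; exact: J_le_P.
  have t2 p : 0 <= J2 p * log2 (psum (fun t => J2 (t, p.2)) / J2 p).
    by rewrite mulr_ge0 ?joint_ge0 // log2_ratio_ge0 ?joint_ge0 //; case: p => x z; exact: J_le_P.
  rewrite (eq_esum (fun xy _ => EFinD _ _)) esumD; last 2 first.
  + by move=> p _; rewrite lee_fin mulr_ge0 ?joint_ge0.
  + by move=> p _; rewrite lee_fin mulr_ge0 ?joint_ge0.
  congr (_ + _)%E.
  + under eq_esum do rewrite mulrC.
    apply: (@esum_prod2 _ _ (fun q => J1 q * log2 (psum (fun t => J1 (t, q.2)) / J1 q)) J2) => //.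
    * exact: joint_ge0.
    * exact: sumJ.
  + apply: (@esum_prod2' _ _ J1 (fun q => J2 q * log2 (psum (fun t => J2 (t, q.2)) / J2 q))) => //.
    * exact: joint_ge0.
    * exact: sumJ.
- move=> [[a z] [b z']] [[a' y] [b' y']] /set_mem sa /set_mem sa' /= [e ->->].
  rewrite /= in sa sa'.
  have := congr1 (take m) e; rewrite (take_size_cat _ sa) (take_size_cat _ sa') => ->.
  by have := congr1 (drop m) e; rewrite (drop_size_cat _ sa) (drop_size_cat _ sa') => ->.
- move=> [x s] hx.
  have hq : Q2 X Zs n m (x, s) != 0 by apply: contra hx => /eqP ->; rewrite mul0r.
  have sx : size x = n := pXn_size (Q2_supp hq).
  have : indep_out Zs [:: take m x; drop m x] s != 0.
    by apply: contra hq => /eqP; rewrite /Q2 /= => ->; rewrite mulr0.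
  rewrite /indep_out; case: s {hx hq} => [|a [|b [|c s]]] //=; rewrite ?eqxx // => _.
  exists ((take m x, a), (drop m x, b)); last by rewrite /= cat_take_drop.
  by rewrite /= size_takel // sx.
- move=> [[x1 z1] [x2 z2]] sx; rewrite /= in sx; rewrite /= Q2_psum Q2_cat //.
  by rewrite cent_split ?joint_ge0 //; apply: J_le_P.
- move=> [[x1 z1] [x2 z2]] /= nD.
  have p0 : pXn X m x1 = 0 by apply: p1_out => h; apply: nD.
  have -> : J1 (x1, z1) = 0 by rewrite /J1 /joint_n /= p0 mul0r.
  by rewrite !(mul0r, mulr0, addr0).
Qed.

Lemma indep_ge0 xs s : 0 <= indep_out Zs xs s.
Proof.
rewrite /indep_out; case: ifP => // _.
by apply: prodr_ge0 => i _; exact: chan_ge0.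
Qed.

Lemma mi_prod : cent (joint_n X Zs m) \is a fin_num -> cent (joint_n X Zs (n - m)) \is a fin_num ->
  mi (Q2 X Zs n m) = (mi (joint_n X Zs m) + mi (joint_n X Zs (n - m)))%E.
Proof.
move=> c1 c2.
have hq : (fun t => psum (fun u => Q2 X Zs n m (t, u))) = pXn X n.
  apply: funext => t; rewrite /psum /Q2 /=; under eq_esum do rewrite EFinM.
  rewrite esumZl ?pXn_ge0 ?indep2_sum ?mule1 //.
  by move=> u; rewrite lee_fin indep_ge0.
have hj k : (fun t => psum (fun u => joint_n X Zs k (t, u))) = pXn X k.
  by apply: funext => t; rewrite joint_marg.
rewrite /mi hq !hj ent_prod cent_prod.
have e1 := ent_pXn_fin X m; have e2 := ent_pXn_fin X (n - m).
rewrite -(fineK e1) -(fineK e2) -(fineK c1) -(fineK c2).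
by rewrite fin_num_oppeD // addeACA.
Qed.

End Prod2.

End Prod.

From mathcomp Require Import zify.

Section Block.
Variables (R : realType) (A : finType) (X : process R A).

Fixpoint allseq (k : nat) : seq (seq A) :=
  if k is k'.+1 then [seq rcons p.1 p.2 | p <- [seq (y, a) | y <- allseq k', a <- enum A]]
  else [:: [::]].

Lemma allseq_size k y : y \in allseq k -> size y = k.
Proof.
elim: k y => [|k IH] y /=; first by rewrite inE => /eqP ->.
case/mapP => -[y' a] /allpairsP [[y'' a'] [/= hy _ [-> ->]]] ->.
by rewrite size_rcons IH.
Qed.

Lemma px_marg k s : \sum_(y <- allseq k) px X (s ++ y) = px X s.
Proof.
elim: k s => [|k IH] s /=; first by rewrite big_cons big_nil cats0 addr0.
rewrite big_map big_allpairs -IH; apply: eq_bigr => y _ /=.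
rewrite big_enum /= (px_cons X (s ++ y)); apply: eq_bigr => a _.
by rewrite rcons_cat.
Qed.

Lemma drop_catl (m : nat) (x y : seq A) : (m <= size x)%N -> drop m (x ++ y) = drop m x ++ y.
Proof.
rewrite drop_cat; case: ltnP => // h1 h2.
have -> : m = size x by apply/eqP; rewrite eqn_leq h1 h2.
by rewrite drop_size subnn drop0.
Qed.

Lemma bi_split b :
  (forall t x, (0 < t)%N -> size x = (t * b)%N -> px X x = \prod_(i < t) px X (block b i x)) ->
  (0 < b)%N -> forall u n x, (0 < u)%N -> (u * b <= n)%N -> size x = n ->
  px X x = px X (take (u * b) x) * px X (drop (u * b) x).
Proof.
move=> hb b0 u n x u0 mn sx.
set m := (u * b)%N in mn *.
set t := n.+1.
have ntb : (n < t * b)%N by rewrite /t (leq_trans (ltnSn n)) // leq_pmulr.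
set k := (t * b - n)%N.
have ut : (u < t)%N by rewrite -(ltn_pmul2r b0); apply: leq_ltn_trans ntb.
rewrite -(px_marg k x) -(px_marg k (drop m x)) big_distrr /=.
rewrite big_seq [in RHS]big_seq; apply: eq_bigr => y hy.
have sy := allseq_size hy.
have sz : size (x ++ y) = (t * b)%N by rewrite size_cat sx sy /k; lia.
have mx : (m <= size x)%N by rewrite sx.
rewrite (hb t (x ++ y)) //.
rewrite (hb u (take m x)) //; last by rewrite size_takel.
rewrite (hb (t - u)%N (drop m x ++ y)); last first.
  by rewrite size_cat size_drop sx sy /k mulnBl -/m; lia.
  by rewrite subn_gt0.
move: (px X) => F.
have e1 : \prod_(i < t) F (block b i (x ++ y)) = \prod_(0 <= i < t) F (block b i (x ++ y)).
  by rewrite big_mkord.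
rewrite e1 (big_cat_nat (leq0n u) (ltnW ut)) /=; congr (_ * _).
- rewrite big_mkord; apply: eq_bigr => i _; congr F; rewrite /block.
  rewrite -(takel_cat y mx).
  have hi : (i * b + b <= m)%N by rewrite /m -mulSnr leq_mul2r ltn_ord orbT.
  have -> : m = ((m - i * b) + i * b)%N by rewrite subnK // (leq_trans _ hi) // leq_addr.
  by rewrite -take_drop take_takel // leq_subRL // ?addnC // (leq_trans _ hi) // leq_addr.
- rewrite -{1}(add0n u) big_addn big_mkord; apply: eq_bigr => i _; congr F.
  by rewrite /block -drop_catl // drop_drop /m mulnDl addnC.
Qed.

Lemma pXn_split b :
  (forall t x, (0 < t)%N -> size x = (t * b)%N -> px X x = \prod_(i < t) px X (block b i x)) ->
  (0 < b)%N -> forall u n x, (0 < u)%N -> (u * b <= n)%N ->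
  pXn X n x = pXn X (u * b) (take (u * b) x) * pXn X (n - u * b) (drop (u * b) x).
Proof.
move=> hb b0 u n x u0 mn; rewrite /pXn.
have [sx|nsx] := eqVneq (size x) n.
  have mx : (u * b <= size x)%N by rewrite sx.
  rewrite (size_takel mx) size_drop sx !eqxx; exact: (bi_split hb b0 u0 mn sx).
case: ifP => h1; last by rewrite mul0r.
have mx : (u * b <= size x)%N.
  by move: h1; rewrite size_take; case: ifP => [/ltnW //| _ /eqP ->].
rewrite size_drop; case: ifP => h2; last by rewrite mulr0.
by exfalso; move: h2 nsx => /eqP h2 /eqP; apply; lia.
Qed.

End Block.

Section Limit.
Variable R : realType.

Lemma ev_ex (P : nat -> Prop) : (exists N, forall n, (N <= n)%N -> P n) -> \forall n \near \oo, P n.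
Proof. move=> [N hN]; exists N => // n; exact: hN. Qed.

Lemma ex_ev (P : nat -> Prop) : (\forall n \near \oo, P n) -> exists N, forall n, (N <= n)%N -> P n.
Proof. move=> [N _ hN]; exists N => n; apply: hN. Qed.

Lemma ev_large (c : R) : exists N, forall n, (N <= n)%N -> c <= n%:R.
Proof. by apply: ex_ev; apply: nbhs_infty_ger. Qed.

Lemma small_div (c e : R) : 0 < e -> exists N, forall n, (N <= n)%N -> c <= e * n%:R.
Proof.
move=> e0; have [N hN] := ev_large (c / e); exists N => n /hN h.
by have := ler_wpM2l (ltW e0) h; rewrite [e * (c / e)]mulrC divfK // gt_eqF.
Qed.

Variables (a : nat -> R) (b : nat) (g : nat -> nat -> R).
Hypothesis b0 : (0 < b)%N.
Hypothesis a0 : forall n, (0 < n)%N -> 0 <= a n.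
Hypothesis hS : forall u n, (0 < u)%N -> (u * b < n)%N -> a n <= a (u * b) + a (n - u * b).
Hypothesis hg : forall r, (0 < r)%N -> (r < b)%N -> forall e, 0 < e ->
  exists N, forall n, (N <= n)%N -> `|g r n| <= e * n%:R.
Hypothesis hL : forall r t, (0 < r)%N -> (r < b)%N -> (0 < t)%N ->
  a (t * b) + a r <= a (t * b + r) + g r (t * b + r).

Let S := [set x : R | exists2 k, (0 < k)%N & x = a (k * b) / (k * b)%:R].
Let lam := inf S.

Lemma S_ne : S !=set0.
Proof. by exists (a (1 * b) / (1 * b)%:R); exists 1%N. Qed.

Lemma S_lb : lbound S 0.
Proof.
move=> x [k k0 ->]; rewrite divr_ge0 // a0 //.
by rewrite muln_gt0 k0.
Qed.

Lemma lam_ge0 : 0 <= lam.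
Proof. by apply: lb_le_inf; [exact: S_ne|exact: S_lb]. Qed.

Lemma lam_le k : (0 < k)%N -> lam <= a (k * b) / (k * b)%:R.
Proof.
move=> k0; apply: ge_inf; first by exists 0; exact: S_lb.
by exists k.
Qed.

Lemma upper_bound K : (0 < K)%N -> forall n, (0 < n)%N ->
  a n <= (n %/ (K * b))%:R * a (K * b) + \sum_(s < K * b) `|a s|.
Proof.
move=> K0; set d := (K * b)%N.
have d0 : (0 < d)%N by rewrite muln_gt0 K0.
have M0 : 0 <= \sum_(s < d) `|a s| by apply: sumr_ge0.
elim/ltn_ind => n IH n0.
have [nd|dn] := ltnP n d.
  rewrite divn_small // mul0r add0r.
  apply: le_trans (ler_norm _) _.
  by rewrite (bigD1 (Ordinal nd)) //= lerDl sumr_ge0.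
have [ed|dlt] := eqVneq n d.
  by rewrite ed divnn d0 mul1r lerDl.
have dn' : (d < n)%N by rewrite ltn_neqAle eq_sym dlt dn.
apply: le_trans (hS K0 dn') _; rewrite -/d.
have := IH (n - d)%N; rewrite ltn_subrL d0 n0 subn_gt0 dn' => /(_ isT isT) h.
apply: le_trans (lerD (lexx _) h) _.
rewrite addrA lerD2r.
have -> : (n %/ d)%N = ((n - d) %/ d).+1.
  by rewrite divnBr ?dvdnn // divnn d0 subn1 prednK // divn_gt0.
by rewrite -addn1 natrD mulrDl mul1r addrC.
Qed.

Lemma lower_bound n : (b < n)%N ->
  lam * n%:R - lam * b%:R - (if (n %% b == 0)%N then 0 else `|g (n %% b) n|) <= a n.
Proof.
move=> bn; set t := (n %/ b)%N; set r := (n %% b)%N.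
have en : n = (t * b + r)%N by rewrite /t /r -divn_eq.
have t0 : (0 < t)%N by rewrite /t divn_gt0 // ltnW.
have rb : (r < b)%N by rewrite /r ltn_pmod.
have hl : lam * (t * b)%:R <= a (t * b).
  have tb0 : (0:R) < (t * b)%:R by rewrite ltr0n muln_gt0 t0.
  by have := lam_le t0; rewrite ler_pdivlMr.
have lg0 := lam_ge0.
have nR : n%:R = (t * b)%:R + r%:R :> R by rewrite en natrD.
have rbR : r%:R <= b%:R :> R by rewrite ler_nat ltnW.
case: eqP => [r0|/eqP rn0].
  rewrite subr0; move: hl; rewrite -/r r0 addn0 in en; rewrite en => hl.
  by apply: le_trans hl; rewrite lerBlDr lerDl mulr_ge0.
have r0 : (0 < r)%N by rewrite lt0n.
have := hL r0 rb t0; rewrite -en => h.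
have ar := a0 r0.
have gn := ler_norm (g r n).
have := (le_trans (lerB (lexx _) gn) _ : _); move: h; rewrite -/r nR.
nra.
Qed.

Lemma g_unif e : 0 < e -> exists N, forall r n, (0 < r)%N -> (r < b)%N -> (N <= n)%N ->
  `|g r n| <= e * n%:R.
Proof.
move=> e0.
suff : forall B, exists N, forall r n, (0 < r)%N -> (r < b)%N -> (r < B)%N -> (N <= n)%N ->
  `|g r n| <= e * n%:R.
  by case/(_ b) => N hN; exists N => r n r0 rb; apply: hN.
elim => [|B [N hN]]; first by exists 0%N.
have [/andP[B0 Bb]|nB] := boolP ((0 < B)%N && (B < b)%N).
  have [N' hN'] := hg B0 Bb e0.
  exists (maxn N N') => r n r0 rb; rewrite ltnS leq_eqVlt geq_max => /orP[/eqP ->|rB] /andP[h1 h2].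
    exact: hN'.
  exact: hN.
exists N => r n r0 rb; rewrite ltnS leq_eqVlt => /orP[/eqP rB|rB] hn; last exact: hN.
by exfalso; move: nB; rewrite -rB r0 rb.
Qed.

Lemma limit_ex : (fun n => a n.+1 / n.+1%:R) @ \oo --> lam.
Proof.
apply/cvgrPdist_le => e e0; apply: ev_ex.
have e2 : 0 < e / 2 by rewrite divr_gt0.
have e4 : 0 < e / 4 by rewrite divr_gt0.
have hinf : has_inf S by split; [exact: S_ne | exists 0; exact: S_lb].
have [x [K K0 ->] hK] := inf_adherent e2 hinf.
set d := (K * b)%N in hK.
have d0 : (0 < d)%N by rewrite muln_gt0 K0.
set M := \sum_(s < d) `|a s|.
have [N1 hN1] := small_div M e2.
have [N2 hN2] := small_div (lam * b%:R) e4.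
have [N3 hN3] := g_unif e4.
exists (maxn b.+1 (maxn N1 (maxn N2 N3))) => n.
rewrite !geq_max => /and4P[bn h1 h2 h3].
set m := n.+1.
have m0 : (0 < m)%N by [].
have mR : (0 : R) < m%:R by rewrite ltr0n.
have lg0 := lam_ge0.
rewrite ler_distl; apply/andP; split.
- rewrite lerBlDr ler_pdivrMr //.
  have hub := upper_bound K0 m0; rewrite -/d -/M in hub.
  have hM := hN1 m (leq_trans h1 (leqnSn n)).
  have hq : (m %/ d)%:R * d%:R <= m%:R :> R by rewrite -natrM ler_nat leq_trunc_div.
  have dR : (0 : R) < d%:R by rewrite ltr0n.
  have had : a d <= (lam + e / 2) * d%:R by rewrite -ler_pdivrMr // ltW.
  have ad0 : 0 <= a d := a0 d0.
  have q0 : (0 : R) <= (m %/ d)%:R by [].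
  nra.
- rewrite -lerBlDr ler_pdivlMr //.
  have hlb := lower_bound (leqW bn : (b < m)%N).
  have := hN2 m (leq_trans h2 (leqnSn n)).
  have : (if (m %% b == 0)%N then 0 else `|g (m %% b) m|) <= e / 4 * m%:R.
    case: ifPn => [_|/eqP hr]; first by rewrite mulr_ge0 ?ltW.
    apply: hN3 (leq_trans h3 (leqnSn n)); first by rewrite lt0n; apply/eqP.
    by rewrite ltn_pmod // (leq_ltn_trans _ bn).
  move: hlb; nra.
Qed.

End Limit.

Unset Implicit Arguments.

Theorem lemma3p5 (R : realType) (A : finType) (O O' : choiceType)
    (X : process R A) (Z : channel R A O) (Zs : channel R A O') :
  block_independent X -> admissible Z Zs ->
  exists L : R,
    ((fun n : nat => mi (joint_n X Zs n.+1) * ((n.+1)%:R^-1)%:E) @ \oo --> L%:E)%E /\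
    info_rate X Z = L%:E /\ info_rate X Zs = L%:E.
Proof.
move=> [b [b0 hb]] [_ [h2 [h3 [h4a _]]]].
pose a n := fine (mi (joint_n X Zs n)).
have facts n : (0 < n)%N -> [/\ \esum_(x in [set: seq A]) (pXn X n x)%:E = 1%E,
      cent (joint_n X Zs n) \is a fin_num & (0 <= mi (joint_n X Zs n))%E].
  by move=> n0; apply: merge_facts (h3 X n n n0 (leqnn n)).
have fin n : (0 < n)%N -> mi (joint_n X Zs n) = (a n)%:E.
  by move=> n0; have [f _ _] := merge_le (h3 X n n n0 (leqnn n)); rewrite /a fineK.
have a0 n : (0 < n)%N -> 0 <= a n.
  by move=> n0; have [_ _ h] := facts n n0; rewrite -lee_fin -fin.
have prod u n : (0 < u)%N -> (u * b < n)%N ->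
    mi (Q2 X Zs n (u * b)%N) = ((a (u * b)%N)%:E + (a (n - u * b)%N)%:E)%E.
  move=> u0 ubn.
  have ub0 : (0 < u * b)%N by rewrite muln_gt0 u0 b0.
  have nub0 : (0 < n - u * b)%N by rewrite subn_gt0.
  have [s1 c1 _] := facts _ ub0; have [s2 c2 _] := facts _ nub0.
  rewrite (mi_prod (ltnW ubn) _ s1 s2 c1 c2) ?fin //.
  by move=> x; apply: (pXn_split hb b0) => //; exact: ltnW.
have hS u n : (0 < u)%N -> (u * b < n)%N -> a n <= a (u * b)%N + a (n - u * b)%N.
  move=> u0 ubn.
  have ub0 : (0 < u * b)%N by rewrite muln_gt0 u0 b0.
  have [_ _ h] := merge_le (h3 X (u * b)%N n ub0 (ltnW ubn)).
  by move: h; rewrite prod // fin ?(ltn_trans ub0 ubn) // -EFinD lee_fin.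
have exG : forall tau : nat, exists gamma : nat -> R, (1 <= tau)%N ->
    little_o_id gamma /\ forall n, (tau <= n)%N ->
      refine_coupling X Zs n (fun x => [:: take (n - tau) x; drop (n - tau) x]) (gamma n).
  move=> tau; have [t0|t0] := leqP 1 tau; last by exists (fun=> 0).
  have [gamma [_ [lo [_ hr]]]] := h4a tau t0.
  by exists gamma => _; split => // n tn; have [_ ?] := hr X n tn.
have [G hG] := choice exG.
have hL r t : (0 < r)%N -> (r < b)%N -> (0 < t)%N ->
    a (t * b)%N + a r <= a (t * b + r)%N + G r (t * b + r)%N.
  move=> r0 rb t0; set n := (t * b + r)%N.
  have [_ hr] := hG r r0.
  have := refine_le (hr n (leq_addl _ _)).
  have -> : (n - r)%N = (t * b)%N by rewrite /n addnK.
  have nb : (t * b < n)%N by rewrite /n; lia.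
  rewrite (prod t n t0 nb) fin; last by rewrite /n addn_gt0 r0 orbT.
  have -> : (n - t * b)%N = r by rewrite /n addKn.
  by rewrite -!EFinD lee_fin.
have hg r : (0 < r)%N -> (r < b)%N -> forall e : R, 0 < e ->
    exists N, forall n, (N <= n)%N -> `|G r n| <= e * n%:R.
  move=> r0 rb e e0; have [lo _] := hG r r0.
  move/cvgrPdist_le: lo => /(_ e e0) /ex_ev [N hN].
  exists N.+1 => n hn; have := hN n (ltnW hn).
  have n0 : (0 : R) < n%:R by rewrite ltr0n (leq_ltn_trans _ hn).
  rewrite sub0r normrN normrM normfV normr_nat ler_pdivrMr //.
have lim := limit_ex b0 a0 hS hg hL.
set L := inf _ in lim.
exists L.
have seqE : (fun n : nat => (mi (joint_n X Zs n.+1) * ((n.+1)%:R^-1)%:E)%E) =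
            (fun n => (a n.+1 / n.+1%:R)%:E).
  by apply: funext => n; rewrite fin // EFinM.
have cv : ((fun n : nat => (mi (joint_n X Zs n.+1) * ((n.+1)%:R^-1)%:E)%E) @ \oo --> L%:E).
  rewrite seqE; apply: cvg_EFin; last exact: lim.
  by apply: ev_ex; exists 0%N.
split => //.
have ie : info_rate X Zs = L%:E.
  by rewrite /info_rate; have [-> _] := cvg_limn_einf_sup cv.
by rewrite h2 ie.
Qed.
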